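(* Let $n\ge2$, let $a_1,\dots,a_n$ be real numbers, $C(t)=\sum_{j=1}^n a_j\cos jt$, $S(t)=\sum_{j=1}^n a_j\sin jt$, and suppose $S(t_1)=0$ with $t_1\in(0,\pi)$. Define $a^{(1)}_1,\dots,a^{(1)}_{n-1}$ by setting $a^{(1)}_n=a^{(1)}_{n+1}=0$ and, for $k=n,n-1,\dots,2$ (in this order), $$a^{(1)}_{k-1}=2a_k+2\cos t_1\, a^{(1)}_k-a^{(1)}_{k+1}.$$ Then $C(t_1)=-\dfrac{a^{(1)}_1}{2}$.
   Context: The recursion expresses $a^{(1)}_1,\dots,a^{(1)}_{n-1}$ uniquely in terms of $a_2,\dots,a_n$ and $\cos t_1$; it is equivalent to the equations $a_k=\tfrac12a^{(1)}_{k-1}-\cos t_1\,a^{(1)}_k+\tfrac12a^{(1)}_{k+1}$ for $k=2,\dots,n$ (with $a^{(1)}_n=a^{(1)}_{n+1}=0$). *)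

(* Defs.v *)
From Stdlib Require Import Reals.
Open Scope R_scope.

Definition Csum (n : nat) (a : nat -> R) (t : R) : R :=
  sum_f 1 n (fun j => a j * cos (INR j * t)).

Definition Ssum (n : nat) (a : nat -> R) (t : R) : R :=
  sum_f 1 n (fun j => a j * sin (INR j * t)).

(* Downward recursion with a1_n = a1_{n+1} = 0 and, for k = n, ..., 2,
   a1_{k-1} = 2 a_k + 2 c a1_k - a1_{k+1}.
   rec_pair n a c m = (a1_{n-m}, a1_{n-m+1}) for m <= n-1. *)
Fixpoint rec_pair (n : nat) (a : nat -> R) (c : R) (m : nat) : R * R :=
  match m with
  | O => (0, 0)
  | S m' => let (x, y) := rec_pair n a c m' in
            (2 * a (n - m')%nat + 2 * c * x - y, x)
  end.

(* a1 k for 1 <= k <= n+1 (k = n, n+1 give 0). *)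
Definition a1 (n : nat) (a : nat -> R) (c : R) (k : nat) : R :=
  fst (rec_pair n a c (n - k)%nat).

(* Main.v *)
Require Import Defs.
From Stdlib Require Import Reals Lra Lia.
Open Scope R_scope.

Lemma sum_f_split (s n : nat) (f : nat -> R) : (s < n)%nat ->
  sum_f s n f = f s + sum_f (S s) n f.
Proof.
  intros H. unfold sum_f.
  replace (n - s)%nat with (S (n - S s)) by lia.
  rewrite decomp_sum by lia. simpl pred. f_equal.
  apply sum_eq. intros i _. f_equal. lia.
Qed.

Lemma sum_f_single (n : nat) (f : nat -> R) : sum_f n n f = f n.
Proof. unfold sum_f. rewrite Nat.sub_diag. simpl. f_equal; lia. Qed.

Lemma inv (n : nat) (a : nat -> R) (t : R) (m : nat) :
  (1 <= m)%nat -> (m <= n - 1)%nat ->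
  sum_f (S (n - m)) n (fun k => a k * cos (INR k * t)) =
    (fst (rec_pair n a (cos t) m) * cos ((INR (n - m) + 1) * t)
     - snd (rec_pair n a (cos t) m) * cos (INR (n - m) * t)) / 2 /\
  sum_f (S (n - m)) n (fun k => a k * sin (INR k * t)) =
    (fst (rec_pair n a (cos t) m) * sin ((INR (n - m) + 1) * t)
     - snd (rec_pair n a (cos t) m) * sin (INR (n - m) * t)) / 2.
Proof.
  induction m as [|m IH]; intros H1 H2; [lia|].
  destruct m as [|m].
  - simpl. replace (S (n - 1)) with n by lia. rewrite !sum_f_single.
    rewrite <- S_INR. replace (S (n - 1)) with n by lia. rewrite Nat.sub_0_r.
    split; lra.
  - specialize (IH ltac:(lia) ltac:(lia)).
    change (rec_pair n a (cos t) (S (S m))) with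
      (let (x, y) := rec_pair n a (cos t) (S m) in
       (2 * a (n - S m)%nat + 2 * cos t * x - y, x)).
    destruct (rec_pair n a (cos t) (S m)) as [x y] eqn:E. simpl fst in *; simpl snd in *.
    replace (S (n - S (S m))) with (n - S m)%nat by lia.
    rewrite !(sum_f_split (n - S m) n) by lia.
    destruct IH as [IC IS]. rewrite IC, IS.
    assert (HJ : INR (n - S m) = INR (n - S (S m)) + 1).
    { rewrite <- S_INR. f_equal. lia. }
    set (J := INR (n - S (S m))) in *. rewrite HJ.
    replace ((J + 1 + 1) * t) with ((J + 1) * t + t) by ring.
    replace (J * t) with ((J + 1) * t - t) by ring.
    rewrite cos_plus, sin_plus, cos_minus, sin_minus.
    split; field.
Qed.

Theorem corollary1 (n : nat) (a : nat -> R) (t1 : R) :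
  (2 <= n)%nat ->
  0 < t1 < PI ->
  Ssum n a t1 = 0 ->
  Csum n a t1 = - (a1 n a (cos t1) 1%nat) / 2.
Proof.
  intros Hn Ht HS.
  destruct (inv n a t1 (n - 1) ltac:(lia) ltac:(lia)) as [IC IS].
  replace (n - (n - 1))%nat with 1%nat in * by lia.
  unfold a1. unfold Csum, Ssum in *.
  rewrite sum_f_split in HS |- * by lia.
  rewrite IC. rewrite IS in HS.
  destruct (rec_pair n a (cos t1) (n - 1)) as [x y]; simpl fst in *; simpl snd in *.
  replace ((INR 1 + 1) * t1) with (2 * t1) in * by (simpl; ring).
  replace (INR 1 * t1) with t1 in * by (simpl; ring).
  rewrite sin_2a in HS. rewrite cos_2a_cos.
  assert (Hs : sin t1 <> 0) by (apply Rgt_not_eq, sin_gt_0; lra).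
  assert (Ha : a 1%nat = y / 2 - x * cos t1).
  { apply (Rmult_eq_reg_l (sin t1)); [|exact Hs]. lra. }
  rewrite Ha. field.
Qed.
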